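(* Let $t_0\in\mathbb{Z}$, $b,c:\mathbb{Z}\to[0,\infty)$, $x_0>0$, $y_0>0$, $z_0\ge0$, $N=x_0+y_0+z_0$, $\kappa=\frac{y_0}{x_0}$, and $$g(t)=\frac{b(t)\kappa}{\left[\prod_{i=t_0}^{t}(1+(c-b)(i))\right]+\kappa\,(1+(c-b)(t))}.$$ Consider the discrete system $$x(t+1)=x(t)-\frac{b(t)x(t)y(t+1)}{x(t)+y(t)},\quad y(t+1)=y(t)+\frac{b(t)x(t)y(t+1)}{x(t)+y(t)}-c(t)y(t+1),\quad z(t+1)=z(t)+c(t)y(t+1),$$ with $x(t_0)=x_0$, $y(t_0)=y_0$, $z(t_0)=z_0$. If $1+c(t)-b(t)\neq0$ and $1+g(t)\neq0$ for all $t\in\mathbb{Z}$, then the unique solution is given, for integers $t\ge t_0$, by $$x(t)=x_0\left[\prod_{i=t_0}^{t-1}(1+g(i))\right]^{-1},\qquad y(t)=y_0\left[\prod_{i=t_0}^{t-1}(1+(c-b)(i))(1+g(i))\right]^{-1},$$ $$z(t)=N-\left(x_0+y_0\left[\prod_{i=t_0}^{t-1}(1+(c-b)(i))\right]^{-1}\right)\left[\prod_{i=t_0}^{t-1}(1+g(i))\right]^{-1}.$$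
   Context: An empty product (when $t=t_0$) equals $1$. *)

(* Defs.v *)
From HB Require Import structures.
From mathcomp Require Import all_boot all_order all_algebra.
Set Implicit Arguments. Unset Strict Implicit. Unset Printing Implicit Defensive.
Import Order.TTheory GRing.Theory Num.Theory.
Local Open Scope ring_scope.

(* iprod f a b = prod_{i=a}^{b} f i over integers; empty product (= 1) if b < a. *)
Definition iprod (R : comRingType) (f : int -> R) (a b : int) : R :=
  if a <= b then \prod_(k < (`|b - a|%N).+1) f (a + k%:Z) else 1.

Section Model.
Variables (R : realFieldType) (t0 : int) (b c : int -> R) (x0 y0 z0 : R).

Definition kappa : R := y0 / x0.
Definition cmb (t : int) : R := 1 + (c t - b t).

Definition gden (t : int) : R := iprod cmb t0 t + kappa * cmb t.
Definition g (t : int) : R := b t * kappa / gden t.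

Definition onepg (t : int) : R := 1 + g t.

Definition Xsol (t : int) : R := x0 * (iprod onepg t0 (t - 1))^-1.
Definition Ysol (t : int) : R :=
  y0 * (iprod (fun i => cmb i * onepg i) t0 (t - 1))^-1.
Definition Zsol (t : int) : R :=
  (x0 + y0 + z0) - (x0 + y0 * (iprod cmb t0 (t - 1))^-1) * (iprod onepg t0 (t - 1))^-1.

Definition is_solution (x y z : int -> R) : Prop :=
  [/\ x t0 = x0, y t0 = y0, z t0 = z0 &
   forall t : int, t0 <= t ->
     [/\ x (t + 1) = x t - b t * x t * y (t + 1) / (x t + y t),
         y (t + 1) = y t + b t * x t * y (t + 1) / (x t + y t) - c t * y (t + 1) &
         z (t + 1) = z t + c t * y (t + 1)]].
End Model.

(* Main.v *)
Require Import Defs.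
From HB Require Import structures.
From mathcomp Require Import all_boot all_order all_algebra.
From mathcomp Require Import zify ring lra.
Import Order.TTheory GRing.Theory Num.Theory.
Local Open Scope ring_scope.

Theorem theorem16 (R : realFieldType) (t0 : int) (b c : int -> R) (x0 y0 z0 : R) :
  (forall t, 0 <= b t) -> (forall t, 0 <= c t) ->
  0 < x0 -> 0 < y0 -> 0 <= z0 ->
  (forall t, 1 + c t - b t != 0) ->
  (forall t, gden t0 b c x0 y0 t != 0) ->
  (forall t, 1 + g t0 b c x0 y0 t != 0) ->
  is_solution t0 b c x0 y0 z0
    (Xsol t0 b c x0 y0) (Ysol t0 b c x0 y0) (Zsol t0 b c x0 y0 z0) /\
  (forall x y z : int -> R, is_solution t0 b c x0 y0 z0 x y z ->
     forall t, t0 <= t ->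
       [/\ x t = Xsol t0 b c x0 y0 t, y t = Ysol t0 b c x0 y0 t &
           z t = Zsol t0 b c x0 y0 z0 t]).
Proof.
move=> hb hc hx0 hy0 hz0 hcb hgd hg.
have Tex : forall t, t0 <= t -> exists n : nat, t = t0 + n%:Z.
  move=> t ht; exists `|t - t0|%N; lia.
have iprodE : forall (f : int -> R) (n : nat),
    iprod f t0 (t0 + n%:Z - 1) = \prod_(k < n) f (t0 + k%:Z).
  move=> f [|n]; rewrite /iprod.
    rewrite addr0 ifF ?big_ord0 //; apply/negbTE; rewrite -ltNge; lia.
  have -> : t0 + n.+1%:Z - 1 = t0 + n%:Z by rewrite -addn1 PoszD addrA addrK.
  rewrite ifT; last lia.
  by rewrite [t0 + _]addrC addrK.
have T1 : forall n : nat, t0 + n%:Z + 1 = t0 + n.+1%:Z.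
  by move=> n; rewrite -addn1 PoszD addrA.
set P := fun n : nat => \prod_(k < n) cmb b c (t0 + k%:Z).
set G := fun n : nat => \prod_(k < n) onepg t0 b c x0 y0 (t0 + k%:Z).
have Xn : forall n : nat, Xsol t0 b c x0 y0 (t0 + n%:Z) = x0 / G n.
  by move=> n; rewrite /Xsol iprodE.
have Yn : forall n : nat, Ysol t0 b c x0 y0 (t0 + n%:Z) = y0 / (P n * G n).
  by move=> n; rewrite /Ysol iprodE big_split.
have Zn : forall n : nat, Zsol t0 b c x0 y0 z0 (t0 + n%:Z) = x0 + y0 + z0 - (x0 + y0 / P n) / G n.
  by move=> n; rewrite /Zsol !iprodE.
have gdn : forall n : nat, gden t0 b c x0 y0 (t0 + n%:Z) = (P n + kappa x0 y0) * cmb b c (t0 + n%:Z).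
  move=> n; rewrite /gden.
  have -> : iprod (cmb b c) t0 (t0 + n%:Z) = P n.+1.
    by rewrite /P -iprodE -T1 addrK.
  by rewrite /P big_ord_recr /= mulrDl.
have cmb0 : forall t, cmb b c t != 0 by move=> t; rewrite /cmb addrA.
have P0 : forall n, P n != 0.
  elim=> [|n IH]; first by rewrite /P big_ord0 oner_neq0.
  by rewrite /P big_ord_recr /= mulf_neq0.
have G0 : forall n, G n != 0.
  elim=> [|n IH]; first by rewrite /G big_ord0 oner_neq0.
  by rewrite /G big_ord_recr /= mulf_neq0 //; apply: hg.
have Pk0 : forall n, P n + kappa x0 y0 != 0.
  by move=> n; have := hgd (t0 + n%:Z); rewrite gdn mulf_eq0 negb_or => /andP[].
have PS : forall n, P n.+1 = P n * cmb b c (t0 + n%:Z) by move=> n; rewrite /P big_ord_recr.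
have GS : forall n, G n.+1 = G n * onepg t0 b c x0 y0 (t0 + n%:Z) by move=> n; rewrite /G big_ord_recr.
have step : forall n : nat, let t := t0 + n%:Z in
  [/\ Xsol t0 b c x0 y0 (t + 1) = Xsol t0 b c x0 y0 t - b t * Xsol t0 b c x0 y0 t * Ysol t0 b c x0 y0 (t + 1) / (Xsol t0 b c x0 y0 t + Ysol t0 b c x0 y0 t),
      Ysol t0 b c x0 y0 (t + 1) = Ysol t0 b c x0 y0 t + b t * Xsol t0 b c x0 y0 t * Ysol t0 b c x0 y0 (t + 1) / (Xsol t0 b c x0 y0 t + Ysol t0 b c x0 y0 t) - c t * Ysol t0 b c x0 y0 (t + 1) &
      Zsol t0 b c x0 y0 z0 (t + 1) = Zsol t0 b c x0 y0 z0 t + c t * Ysol t0 b c x0 y0 (t + 1)].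
  move=> n t; rewrite /t T1 !Xn !Yn !Zn !PS !GS.
  have := hg (t0 + n%:Z); have := Pk0 n; have := cmb0 (t0 + n%:Z).
  have := P0 n; have := G0 n.
  rewrite /onepg /g gdn /kappa /cmb.
  move: (P n) (G n) (b _) (c _) => p q bb cc q0 p0 cm0 pk0 g0.
  have x00 : x0 != 0 by rewrite gt_eqF.
  have e1 : x0 * p + y0 != 0.
    apply: contraNneq pk0 => h.
    have -> : p + y0 / x0 = (x0 * p + y0) / x0 by field.
    by rewrite h mul0r.
  have e2 : (p * x0 + y0) * (1 + (cc - bb)) + bb * y0 != 0.
    apply: contraNneq g0 => h.
    have -> : 1 + bb * (y0 / x0) / ((p + y0 / x0) * (1 + (cc - bb))) =
      ((p * x0 + y0) * (1 + (cc - bb)) + bb * y0) / ((x0 * p + y0) * (1 + (cc - bb))).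
      by field; do ![apply/andP; split].
    by rewrite h mul0r.
  have e3 : p * x0 + y0 != 0 by rewrite mulrC.
  by split; field; do ![apply/andP; split].
have coef : forall n : nat, let t := t0 + n%:Z in
  1 + c t - b t * Xsol t0 b c x0 y0 t / (Xsol t0 b c x0 y0 t + Ysol t0 b c x0 y0 t) != 0.
  move=> n t; rewrite /t !Xn !Yn.
  have := hg (t0 + n%:Z); have := Pk0 n; have := cmb0 (t0 + n%:Z).
  have := P0 n; have := G0 n.
  rewrite /onepg /g gdn /kappa /cmb.
  move: (P n) (G n) (b _) (c _) => p q bb cc q0 p0 cm0 pk0 g0.
  have x00 : x0 != 0 by rewrite gt_eqF.
  have e1 : x0 * p + y0 != 0.
    apply: contraNneq pk0 => h.
    have -> : p + y0 / x0 = (x0 * p + y0) / x0 by field.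
    by rewrite h mul0r.
  have e2 : (p * x0 + y0) * (1 + (cc - bb)) + bb * y0 != 0.
    apply: contraNneq g0 => h.
    have -> : 1 + bb * (y0 / x0) / ((p + y0 / x0) * (1 + (cc - bb))) =
      ((p * x0 + y0) * (1 + (cc - bb)) + bb * y0) / ((x0 * p + y0) * (1 + (cc - bb))).
      by field; do ![apply/andP; split].
    by rewrite h mul0r.
  have e3 : p * x0 + y0 != 0 by rewrite mulrC.
  have -> : 1 + cc - bb * (x0 / q) / (x0 / q + y0 / (p * q)) =
     ((p * x0 + y0) * (1 + (cc - bb)) + bb * y0) / (p * x0 + y0).
    by field; do ![apply/andP; split].
  by rewrite mulf_neq0 // invr_eq0.
have T0 : t0 = t0 + 0%N%:Z by rewrite addr0.
split.
  split.
  - by have := Xn 0%N; rewrite addr0 => ->; rewrite /G big_ord0 divr1.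
  - by have := Yn 0%N; rewrite addr0 => ->; rewrite /G /P !big_ord0 mulr1 divr1.
  - by have := Zn 0%N; rewrite addr0 => ->; rewrite /G /P !big_ord0 !divr1; ring.
  by move=> t /Tex [n ->]; exact: step n.
move=> x y z [hx hy hz hs] t /Tex [n ->].
elim: n => [|n [IHx IHy IHz]].
  have := Xn 0%N; have := Yn 0%N; have := Zn 0%N; rewrite addr0 => -> -> ->.
  rewrite hx hy hz /G /P !big_ord0 !divr1 mulr1 divr1; split => //; ring.
rewrite -T1.
have [s1 s2 s3] := hs (t0 + n%:Z) ltac:(lia).
have [f1 f2 f3] := step n.
have hK := coef n.
rewrite /= in f1 f2 f3 hK.
rewrite IHx IHy in s1 s2 s3.
move: hK f1 f2 f3 s1 s2 s3.
set X := Xsol _ _ _ _ _ (t0 + n%:Z).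
set Y := Ysol _ _ _ _ _ (t0 + n%:Z).
set w := (X + Y)^-1.
set v := Ysol _ _ _ _ _ _.
set u := y _.
move=> hK f1 f2 f3 s1 s2 s3.
have key : forall u, u = Y + b (t0 + n%:Z) * X * u * w - c (t0 + n%:Z) * u ->
    u * (1 + c (t0 + n%:Z) - b (t0 + n%:Z) * X * w) = Y.
  move=> u0 hu; apply/eqP; rewrite -subr_eq0; apply/eqP.
  transitivity (u0 - (Y + b (t0 + n%:Z) * X * u0 * w - c (t0 + n%:Z) * u0)); first ring.
  by rewrite -hu subrr.
have huv : u = v by apply: (mulIf hK); rewrite !key.
by split; rewrite ?s1 ?s3 ?IHz huv.
Qed.
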